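(* Let $p$ be a prime, $n\geq 3$, and $V$ an $n$-dimensional vector space over $\mathbb{F}_p$. Let $X\subseteq SL(V)$ be a symmetric generating set of $SL(V)$ (i.e. $X=X^{-1}$) with $1\in X$, and suppose $X$ contains a transvection $t$. Let $$\mathcal{C}_n=\{x_n\cdots x_1\, t\, x_1^{-1}\cdots x_n^{-1}\,:\,x_1,\ldots,x_n\in X\}=\{r_1=t,r_2,\ldots,r_m\},$$ and write $r_i=1+v_i\otimes\phi_i$ for $1\le i\le m$. Then $\langle v_1,\ldots,v_m\rangle=V$, and the transvection graph $\Gamma(\mathcal{C}_n)$ contains a directed cycle.
   Context: A transvection is an element $1+d\otimes\phi\in SL(V)$, acting by $x\mapsto x+\phi(x)d$, with $0\neq d\in V$, $0\neq\phi\in V^*$, $\phi(d)=0$. For a set $Y$ of transvections, the transvection graph $\Gamma(Y)$ is the directed graph with vertex set $Y\setminus\{1\}$ and a directed edge from $1+d_1\otimes\phi_1$ to $1+d_2\otimes\phi_2$ if and only if $\phi_2(d_1)\neq 0$. *)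

(* Defs.v *)
From HB Require Import structures.
From mathcomp Require Import all_boot all_order all_algebra.
Set Implicit Arguments. Unset Strict Implicit. Unset Printing Implicit Defensive.
Import GRing.Theory.
Local Open Scope ring_scope.

(* V = column vectors 'cV[F]_n; a matrix g acts by x |-> g *m x.
   A linear functional phi in V^* is a row vector, phi(x) = phi *m x. *)

Definition transv_decomp (F : fieldType) (n : nat) (g : 'M[F]_n)
  (d : 'cV[F]_n) (phi : 'rV[F]_n) : Prop :=
  [/\ d != 0, phi != 0, phi *m d = 0 & g = 1%:M + d *m phi].

Definition is_transvection (F : fieldType) (n : nat) (g : 'M[F]_n) : Prop :=
  exists d phi, transv_decomp g d phi.

Definition mxprod (F : fieldType) (n : nat) (s : seq 'M[F]_n) : 'M[F]_n :=
  foldr (fun a b => a *m b) 1%:M s.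

Definition generates_SL (F : finFieldType) (n : nat) (X : {set 'M[F]_n}) : Prop :=
  forall g : 'M[F]_n, \det g = 1 ->
    exists s : seq 'M[F]_n, all (fun x => x \in X) s /\ g = mxprod s.

(* C_k = { x_k ... x_1 t x_1^-1 ... x_k^-1 : x_i in X }; a tuple
   [:: x_k; ...; x_1] has product w = x_k...x_1 and w^-1 = x_1^-1...x_k^-1. *)
Definition Cset (F : finFieldType) (n k : nat) (X : {set 'M[F]_n}) (t : 'M[F]_n)
  : {set 'M[F]_n} :=
  [set c | [exists s : k.-tuple 'M[F]_n,
      all (fun x => x \in X) s && (c == mxprod s *m t *m invmx (mxprod s))]].

Definition tg_edge (F : finFieldType) (n : nat) (Y : {set 'M[F]_n}) (g h : 'M[F]_n)
  : Prop :=
  [/\ g \in Y, g != 1%:M, h \in Y, h != 1%:M &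
    exists d1 f1 d2 f2, [/\ transv_decomp g d1 f1, transv_decomp h d2 f2 &
                          f2 *m d1 != 0]].

Definition has_directed_cycle (F : finFieldType) (n : nat) (Y : {set 'M[F]_n}) : Prop :=
  exists s : seq 'M[F]_n, [/\ 0 < size s, uniq s &
    forall i, i < size s ->
      tg_edge Y (nth 1%:M s i) (nth 1%:M s (i.+1 %% size s))]%N.

(* Main.v *)
Require Import Defs.
From HB Require Import structures.
From mathcomp Require Import all_boot all_order all_algebra zify ring.
Import GRing.Theory.
Local Open Scope ring_scope.

Section LA.
Variable F : fieldType.

Lemma invmxM' n (x w : 'M[F]_n) : x \in unitmx -> w \in unitmx ->
  invmx (x *m w) = invmx w *m invmx x.
Proof.
move=> ux uw.
have uP : x *m w \in unitmx by rewrite unitmx_mul ux uw.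
have H1 : x *m w *m (invmx w *m invmx x) = 1%:M.
  by rewrite mulmxA -(mulmxA x) mulmxV // mulmx1 mulmxV.
rewrite -[RHS]mul1mx -(mulVmx uP) -mulmxA H1 mulmx1 //.
Qed.

Lemma det_elem n (i j : 'I_n) (c : F) : i != j ->
  \det (1%:M + c *: delta_mx i j) = 1.
Proof.
wlog lt : i j / (j < i)%N.
  move=> W ne; case: (ltngtP j i) => h; first exact: W.
  - rewrite -det_tr linearD /= trmx1 linearZ /= trmx_delta W //.
    by rewrite eq_sym.
  - by move: ne; rewrite -(inj_eq val_inj) /= -h eqxx.
move=> ne; rewrite det_trig.
  rewrite big1 // => k _; rewrite !mxE eqxx.
  case: (k =P i) => [->|]; last by move=> _; rewrite mulr0 addr0.
  by rewrite (negPf ne) mulr0 addr0.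
apply/is_trig_mxP => a b ab; rewrite !mxE.
have -> : (a == b) = false by apply/negbTE; rewrite -(inj_eq val_inj) neq_ltn ab.
case: (a =P i) => [ai|]; case: (b =P j) => [bj|] //= *; rewrite ?mulr0 ?addr0 //.
by move: ab lt; rewrite ai bj; lia.
Qed.


Lemma mul_row_delta n (u : 'rV[F]_n) (i j : 'I_n) :
  u *m delta_mx i j = u 0 i *: delta_mx 0 j.
Proof.
apply/matrixP => a b; rewrite !mxE (bigD1 i) //= big1 ?addr0.
  by rewrite !mxE eqxx /= !ord1 eqxx /=.
by move=> k ki; rewrite !mxE (negPf ki) mulr0.
Qed.

Lemma full_inv n (S : 'M[F]_n) : (1 < n)%N -> S != 0 ->
  (forall g, \det g = 1 -> (S *m g <= S)%MS) -> row_full S.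
Proof.
move=> n1 S0 inv.
have step : forall (u : 'rV[F]_n) (i j : 'I_n), (u <= S)%MS -> u 0 i != 0 -> i != j ->
    ((delta_mx 0 j : 'rV[F]_n) <= S)%MS.
  move=> u i j uS ui ij.
  pose g := 1%:M + (u 0 i)^-1 *: delta_mx i j.
  have : (u *m g <= S)%MS.
    exact: submx_trans (submxMr g uS) (inv g (@det_elem n i j _ ij)).
  rewrite mulmxDr mulmx1 -scalemxAr mul_row_delta scalerA mulVf // scale1r => H.
  have -> : (delta_mx 0 j : 'rV[F]_n) = (u + delta_mx 0 j) + - u by rewrite addrC addKr.
  by apply: addmx_sub => //; rewrite eqmx_opp.
case/rowV0Pn: S0 => u uS u0.
have [i ui] : exists i, u 0 i != 0.
  apply/existsP; apply: contraR u0 => /existsPn H.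
  by apply/eqP/matrixP => a b; rewrite !mxE ord1; have := H b; rewrite negbK => /eqP.
have all_j : forall j, i != j -> ((delta_mx 0 j : 'rV[F]_n) <= S)%MS by move=> j; exact: step u i j uS ui.
have : ((delta_mx 0 i : 'rV[F]_n) <= S)%MS.
  have [j ij] : exists j : 'I_n, i != j.
    case: (i =P Ordinal (ltnW n1)) => [ei|ne]; last by exists (Ordinal (ltnW n1)); apply/eqP.
    exists (Ordinal n1); apply/eqP => /(congr1 val); rewrite ei /=; lia.
  apply: (step _ j i (all_j j ij)); last by rewrite eq_sym.
  by rewrite mxE eqxx /= eqxx oner_neq0.
move=> Hi; rewrite -sub1mx; apply/row_subP => k; rewrite row1.
by case: (i =P k) => [<-|/eqP ne] //; apply: all_j.
Qed.
End LA.

Section Chain.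
Variables (F : finFieldType) (n : nat) (X : {set 'M[F]_n}) (f : 'M[F]_n -> 'M[F]_n) (u0 : 'rV[F]_n).
Hypotheses (n1 : (1 < n)%N) (u0nz : u0 != 0) (X1 : 1%:M \in X)
  (detX : forall x, x \in X -> \det x = 1) (gen : generates_SL X)
  (f1 : f 1%:M = 1%:M)
  (fM : forall x w, \det x = 1 -> \det w = 1 -> f (x *m w) = f w *m f x)
  (fsurj : forall h, \det h = 1 -> exists g, \det g = 1 /\ h = f g).

Definition Sk k := (\sum_(s : k.-tuple 'M[F]_n | all (fun x => x \in X) s)
   <<u0 *m f (mxprod s)>>)%MS.

Lemma det_prod (s : seq 'M[F]_n) : all (fun x => x \in X) s -> \det (mxprod s) = 1.
Proof.
elim: s => [|x s IH] /=; first by rewrite det1.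
by case/andP => hx hs; rewrite det_mulmx detX // IH // mulr1.
Qed.

Lemma mxprod_nseq k : mxprod (nseq k (1%:M : 'M[F]_n)) = 1%:M.
Proof. by elim: k => [|k IH] //=; rewrite IH mulmx1. Qed.

Lemma Sk_mono k : (Sk k <= Sk k.+1)%MS.
Proof.
apply/sumsmx_subP => s hs; apply: (sumsmx_sup [tuple of 1%:M :: s]) => /=.
  by rewrite X1 hs.
by rewrite mul1mx.
Qed.

Lemma Sk_step k x : x \in X -> (Sk k *m f x <= Sk k.+1)%MS.
Proof.
move=> hx; rewrite sumsmxMr; apply/sumsmx_subP => s hs.
rewrite (eqmxMr _ (genmxE _)).
apply: (sumsmx_sup [tuple of x :: s]); first by rewrite /= hx hs.
rewrite genmxE /= fM; [by rewrite mulmxA | exact: detX | exact: det_prod].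
Qed.

Lemma Sk_nz k : Sk k != 0.
Proof.
apply/eqP => h.
have : (u0 <= Sk k)%MS.
  apply: (sumsmx_sup [tuple of nseq k 1%:M]); first by rewrite /= all_nseq X1 orbT.
  by rewrite genmxE /= mxprod_nseq f1 mulmx1.
by rewrite h submx0 (negPf u0nz).
Qed.

Lemma Sk_stable_full k : (Sk k.+1 <= Sk k)%MS -> row_full (Sk k).
Proof.
move=> st; apply: full_inv => //; first exact: Sk_nz.
have inv1 : forall x, x \in X -> (Sk k *m f x <= Sk k)%MS.
  move=> x hx; have h := Sk_step k x hx; exact (submx_trans h st).
have invs : forall s : seq 'M[F]_n, all (fun x => x \in X) s ->
    (Sk k *m f (mxprod s) <= Sk k)%MS.
  elim => [|x s IH] /=; first by rewrite f1 mulmx1.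
  case/andP=> hx hs; rewrite fM; [rewrite mulmxA | exact: detX | exact: det_prod].
  exact: submx_trans (submxMr _ (IH hs)) (inv1 x hx).
move=> g dg; have [h [dh ->]] := fsurj g dg; have [s [hs ->]] := gen h dh.
exact: invs.
Qed.

Lemma Sk_rank k : (minn k.+1 n <= \rank (Sk k))%N.
Proof.
elim: k => [|k IH].
  by apply: leq_trans (geq_minl _ _) _; rewrite lt0n mxrank_eq0 Sk_nz.
have hl := mxrank_leqif_sup (Sk_mono k).
case st: (Sk k.+1 <= Sk k)%MS.
  have := Sk_stable_full k st; rewrite /row_full => /eqP r.
  have := mxrankS (Sk_mono k); rewrite r => h.
  exact: leq_trans (geq_minr _ _) h.
have := ltn_leqif hl; rewrite st /= => lt.
lia.
Qed.

Lemma Sk_full : row_full (Sk n).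
Proof.
rewrite /row_full eqn_leq rank_leq_col /=; have := Sk_rank n; lia.
Qed.

End Chain.

Section Helpers.
Variable F : fieldType.

Lemma nz_entry m n (A : 'M[F]_(m, n)) : A != 0 -> exists i j, A i j != 0.
Proof.
move=> h.
case: (boolP [exists i, exists j, A i j != 0]) => [/existsP[i /existsP[j hij]]|/existsPn H].
  by exists i, j.
exfalso; apply: (negP h); apply/eqP/matrixP => i j; rewrite mxE.
by have /existsPn/(_ j) := H i; rewrite negbK => /eqP.
Qed.

Lemma mul_nz n (a : 'cV[F]_n) (b : 'rV[F]_n) : a != 0 -> b != 0 -> a *m b != 0.
Proof.
move=> /nz_entry [i [k ai]] /nz_entry [k' [j bj]].
rewrite ord1 in ai; rewrite ord1 in bj.
apply/eqP => /matrixP /(_ i j); rewrite !mxE big_ord1 => /eqP.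
by rewrite mulf_eq0 (negPf bj) (negPf ai).
Qed.

Lemma uniq_col n (a c : 'cV[F]_n) (b e : 'rV[F]_n) :
  a *m b = c *m e -> b != 0 -> exists l, a = l *: c.
Proof.
move=> H /nz_entry [k [j bj]]; rewrite ord1 in bj.
exists (e 0 j / b 0 j); apply/matrixP => i k'; rewrite ord1 mxE.
have := congr1 (fun M : 'M[F]_n => M i j) H; rewrite !mxE !big_ord1 => h.
apply: (mulIf bj); rewrite h; field; exact: bj.
Qed.

Lemma uniq_row n (a c : 'cV[F]_n) (b e : 'rV[F]_n) :
  a *m b = c *m e -> a != 0 -> exists l, b = l *: e.
Proof.
move=> H anz.
have H' : b^T *m a^T = e^T *m c^T by rewrite -!trmx_mul H.
have anz' : a^T != 0 by apply: contra anz => /eqP h; rewrite -[a]trmxK h trmx0.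
have [l hl] := @uniq_col n _ _ _ _ H' anz'.
by exists l; rewrite -[b]trmxK hl linearZ /= trmxK.
Qed.

Lemma conj_transv n (w : 'M[F]_n) (d : 'cV[F]_n) (phi : 'rV[F]_n) : w \in unitmx ->
  w *m (1%:M + d *m phi) *m invmx w = 1%:M + (w *m d) *m (phi *m invmx w).
Proof.
by move=> u; rewrite mulmxDr mulmx1 mulmxDl mulmxV // !mulmxA.
Qed.

End Helpers.
Section Cyc.
Local Open Scope nat_scope.
Lemma cycle_lemma (T : finType) (f : T -> T) (x0 : T) :
  exists s : seq T, [/\ (0 < size s)%N, uniq s,
    (forall y, y \in s -> exists k, y = iter k f x0) &
    forall d i, (i < size s)%N -> nth d s (i.+1 %% size s) = f (nth d s i)].
Proof.
set m := order f x0.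
have Hl := looping_order f x0.
rewrite /looping -/m in Hl.
set j := index (iter m f x0) (traject f x0 m).
have jm : (j < m)%N by rewrite -(size_traject f x0 m) index_mem.
have Hj : iter j f x0 = iter m f x0.
  by rewrite -(nth_traject f jm) nth_index.
have Hs : forall d i, (i < m - j)%N -> nth d (drop j (traject f x0 m)) i = iter (j + i) f x0.
  move=> d i im; rewrite nth_drop (set_nth_default x0); last by rewrite size_traject; lia.
  by rewrite nth_traject //; lia.
exists (drop j (traject f x0 m)); rewrite size_drop size_traject; split.
- lia.
- by rewrite drop_uniq // -/(orbit f x0) orbit_uniq.
- move=> y /mem_drop /trajectP [k _ ->]; by exists k.
- move=> d i im; rewrite (Hs d i im).
  case: (ltnP i.+1 (m - j)) => h.
    by rewrite modn_small // Hs // addnS.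
  have -> : i.+1 = m - j by lia.
  rewrite modnn Hs; last lia.
  rewrite addn0 Hj -iterS; congr iter; lia.
Qed.
End Cyc.

Theorem theorem3p1 (p n : nat) (X : {set 'M['F_p]_n}) (t : 'M['F_p]_n) :
  prime p -> (3 <= n)%N ->
  (forall x, x \in X -> \det x = 1) ->
  generates_SL X ->
  (forall x, x \in X -> invmx x \in X) ->
  1%:M \in X ->
  t \in X -> is_transvection t ->
  (forall (v : 'M['F_p]_n -> 'cV['F_p]_n) (phi : 'M['F_p]_n -> 'rV['F_p]_n),
     (forall r, r \in Cset n X t -> transv_decomp r (v r) (phi r)) ->
     forall x : 'cV['F_p]_n,
       exists c : 'M['F_p]_n -> 'F_p, x = \sum_(r in Cset n X t) c r *: v r)
  /\ has_directed_cycle (Cset n X t).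
Proof.
move=> pp n3 detX gen Xinv X1 tX [d [phi [dnz phinz phid tE]]].
set C := Cset n X t.
have n1 : (1 < n)%N by lia.
pose allX := (fun s : seq 'M['F_p]_n => all (fun x => x \in X) s).
have dprod : forall s, allX s -> \det (mxprod s) = 1 := @det_prod _ _ _ detX.
have uprod : forall s, allX s -> mxprod s \in unitmx.
  by move=> s hs; rewrite unitmxE dprod // unitr1.
have inC : forall s : n.-tuple 'M['F_p]_n, allX s ->
    mxprod s *m t *m invmx (mxprod s) \in C.
  by move=> s hs; rewrite inE; apply/existsP; exists s; apply/andP; split.
have ofC : forall r, r \in C -> exists2 s : n.-tuple 'M['F_p]_n, allX s &
    r = mxprod s *m t *m invmx (mxprod s).
  by move=> r; rewrite inE => /existsP [s /andP [hs /eqP ->]]; exists s.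
have wdnz : forall s, allX s -> mxprod s *m d != 0.
  move=> s hs; apply: contra dnz => /eqP h.
  by rewrite -[d]mul1mx -(mulVmx (uprod s hs)) -mulmxA h mulmx0.
have phwnz : forall s, allX s -> phi *m invmx (mxprod s) != 0.
  move=> s hs; apply: contra phinz => /eqP h.
  by rewrite -[phi]mulmx1 -(mulVmx (uprod s hs)) mulmxA h mul0mx.
have conjE : forall s, allX s -> mxprod s *m t *m invmx (mxprod s) =
    1%:M + (mxprod s *m d) *m (phi *m invmx (mxprod s)).
  by move=> s hs; rewrite tE conj_transv // uprod.
have dec_rel : forall s : n.-tuple 'M['F_p]_n, allX s -> forall a b,
    transv_decomp (mxprod s *m t *m invmx (mxprod s)) a b ->
    (exists l, mxprod s *m d = l *: a) /\ (exists l, phi *m invmx (mxprod s) = l *: b).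
  move=> s hs a b [anz bnz ba rE].
  have E : (mxprod s *m d) *m (phi *m invmx (mxprod s)) = a *m b.
    by apply: (addrI 1%:M); rewrite -conjE.
  split; first exact: uniq_col E (phwnz s hs).
  exact: uniq_row E (wdnz s hs).
split.
  move=> v ph hdec x.
  pose T := (\sum_(r in C) <<(v r)^T>>)%MS.
  have dTnz : d^T != 0 by apply: contra dnz => /eqP h; rewrite -[d]trmxK h trmx0.
  have f1 : (1%:M : 'M['F_p]_n)^T = 1%:M by rewrite trmx1.
  have fM : forall x w : 'M['F_p]_n, \det x = 1 -> \det w = 1 -> (x *m w)^T = w^T *m x^T.
    by move=> ? ? _ _; rewrite trmx_mul.
  have fS : forall h : 'M['F_p]_n, \det h = 1 -> exists g, \det g = 1 /\ h = g^T.
    by move=> h dh; exists h^T; rewrite det_tr trmxK.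
  have full := @Sk_full _ n X trmx d^T n1 dTnz X1 detX gen f1 fM fS.
  have sub : (Sk _ n X trmx d^T n <= T)%MS.
    apply/sumsmx_subP => s hs; rewrite genmxE.
    have rC := inC s hs.
    have [[l hl] _] := dec_rel s hs _ _ (hdec _ rC).
    rewrite -trmx_mul hl linearZ /=; apply: scalemx_sub.
    by apply: (sumsmx_sup (mxprod s *m t *m invmx (mxprod s))) => //; rewrite genmxE.
  have xT : (x^T <= T)%MS := submx_trans (submx_full _ full) sub.
  case/sub_sums_genmxP: xT => u hu.
  exists (fun r => u r 0 0).
  rewrite -[x]trmxK hu linear_sum /=; apply: eq_bigr => r _.
  by rewrite trmx_mul trmxK {1}(mx11_scalar (u r)) tr_scalar_mx mul_mx_scalar.
pose ps r := [pick s : n.-tuple 'M['F_p]_n |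
   allX s && (r == mxprod s *m t *m invmx (mxprod s))].
pose vd r := if ps r is Some s then mxprod s *m d else 0.
pose pd r := if ps r is Some s then phi *m invmx (mxprod s) else 0.
have decC : forall r, r \in C -> transv_decomp r (vd r) (pd r).
  move=> r rC; rewrite /vd /pd /ps; case: pickP => [s /andP [hs /eqP ->] | none].
    split; [exact: wdnz | exact: phwnz | | exact: conjE].
    by rewrite mulmxA -(mulmxA phi) mulVmx ?uprod // mulmx1 phid.
  by exfalso; have [s hs rE] := ofC r rC; have := none s; rewrite hs rE eqxx.
have dC : forall r, r \in C -> r != 1%:M.
  move=> r rC; have [a b ba rE] := decC r rC; rewrite rE.
  apply/eqP => h; have h0 : vd r *m pd r = 0 by apply: (addrI 1%:M); rewrite addr0.
  by move: (mul_nz _ _ _ _ a b); rewrite h0 eqxx.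
have f1 : invmx (1%:M : 'M['F_p]_n) = 1%:M by rewrite invmx1.
have fM : forall x w : 'M['F_p]_n, \det x = 1 -> \det w = 1 ->
    invmx (x *m w) = invmx w *m invmx x.
  by move=> x w dx dw; rewrite invmxM' // unitmxE ?dx ?dw unitr1.
have fS : forall h : 'M['F_p]_n, \det h = 1 -> exists g, \det g = 1 /\ h = invmx g.
  by move=> h dh; exists (invmx h); rewrite det_inv dh invr1 invmxK.
have full := @Sk_full _ n X invmx phi n1 phinz X1 detX gen f1 fM fS.
pose T := (\sum_(r in C) <<pd r>>)%MS.
have sub : (Sk _ n X invmx phi n <= T)%MS.
  apply/sumsmx_subP => s hs; rewrite genmxE.
  have rC := inC s hs.
  have [_ [l hl]] := dec_rel s hs _ _ (decC _ rC).
  rewrite hl; apply: scalemx_sub.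
  by apply: (sumsmx_sup (mxprod s *m t *m invmx (mxprod s))) => //; rewrite genmxE.
have out : forall r, r \in C -> exists r', (r' \in C) && (pd r' *m vd r != 0).
  move=> r rC.
  case: (pickP (fun r' => (r' \in C) && (pd r' *m vd r != 0))) => [r' h|none].
    by exists r'.
  exfalso.
  have : (T <= kermx (vd r))%MS.
    apply/sumsmx_subP => r' hr'; rewrite genmxE sub_kermx.
    by have := none r'; rewrite hr' /= => /negbFE.
  move=> /(submx_trans (submx_trans (submx_full 1%:M full) sub)).
  rewrite sub_kermx mul1mx; have [a _ _ _] := decC r rC; by rewrite (negPf a).
pose succ r := odflt r [pick r' | (r' \in C) && (pd r' *m vd r != 0)].
have succP : forall r, r \in C -> (succ r \in C) && (pd (succ r) *m vd r != 0).
  move=> r rC; rewrite /succ; case: pickP => [r' h|none] //=.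
  by exfalso; have [r' h] := out r rC; rewrite none in h.
have edge : forall r, r \in C -> tg_edge C r (succ r).
  move=> r rC; have /andP [sC sE] := succP r rC.
  split; [exact: rC | exact: dC | exact: sC | exact: dC |].
  by exists (vd r), (pd r), (vd (succ r)), (pd (succ r)); split => //; apply: decC.
have tC : t \in C.
  have := inC (nseq_tuple n 1%:M); rewrite /= mxprod_nseq invmx1 mul1mx mulmx1.
  by apply; rewrite /allX all_nseq X1 orbT.
have [s [s0 us sm sE]] := @cycle_lemma _ succ t.
have iterC : forall k, iter k succ t \in C.
  by elim => [|k IH] //=; have /andP [] := succP _ IH.
exists s; split => // i hi.
have hin : nth 1%:M s i \in C.
  by have [k ->] := sm _ (mem_nth 1%:M hi); apply: iterC.
by rewrite sE //; apply: edge.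
Qed.
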